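(* Let $\phi$ be a PDL formula in negation normal form, and let $T$ be an expanded tableau whose root is $r=(\{\phi\} :: [\,],\bot,\emptyset,\emptyset :: \mathrm{stat},\mathrm{uev})$, with $\mathrm{stat}$ and $\mathrm{uev}$ determined from the children of $r$ by the rules. If $r$ is open (i.e. $\mathrm{stat}_r=\mathbf{open}$), then there exists a Hintikka structure for $\phi$.
   Context: Syntax of PDL. Fix disjoint countably infinite sets $\mathrm{AFml}$ (propositional atoms $p,q,\dots$) and $\mathrm{APrg}$ (atomic programs $a,b,\dots$). Formulae and programs are defined by mutual induction. Every atom is a formula and every atomic program is a program. If $\varphi,\psi$ are formulae, then $\neg\varphi$, $\varphi\wedge\psi$, $\varphi\vee\psi$ are formulae and $\varphi?$ is a program. If $\varphi$ is a formula and $\alpha$ a program, then $\langle\alpha\rangle\varphi$ and $[\alpha]\varphi$ are formulae. If $\alpha,\beta$ are programs, then $\alpha;\beta$, $\alpha\cup\beta$ and $\alpha^*$ are programs. A $\langle\rangle$-formula is any $\langle\alpha\rangle\varphi$. It is a non-atomic diamond formula if $\alpha\notin\mathrm{APrg}$. A $\langle{*}\rangle$-formula is any $\langle\alpha^*\rangle\varphi$. NNF means $\neg$ occurs only directly in front of atoms. $\mathrm{nnf}(\varphi)$ is the equivalent NNF formula obtained by pushing negations inward, and ${\sim}\varphi:=\mathrm{nnf}(\neg\varphi)$. Let $\mathrm{ppre}(\varphi):=\{\langle\alpha_1\rangle\cdots\langle\alpha_k\rangle\varphi: k\ge0,\ \alpha_i \text{ programs}\}$. Hintikka structures. - A structure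 $(W,R,L)$ for $\phi$ consists of a nonempty set $W$, a relation $R_a\subseteq W\times W$ for each $a\in\mathrm{APrg}$, and a labelling $L:W\to 2^{\mathrm{Fml}}$ with $\phi\in L(v)$ for some $v\in W$. - The relation $\leadsto$ is defined by: $\langle\alpha;\beta\rangle\chi\leadsto\langle\alpha\rangle\langle\beta\rangle\chi$; $\langle\alpha\cup\beta\rangle\chi\leadsto\langle\alpha\rangle\chi$ and $\langle\alpha\cup\beta\rangle\chi\leadsto\langle\beta\rangle\chi$; $\langle\alpha^*\rangle\chi\leadsto\chi$ and $\langle\alpha^*\rangle\chi\leadsto\langle\alpha\rangle\langle\alpha^*\rangle\chi$; $\langle\theta?\rangle\chi\leadsto\chi$; and nothing else. - A fulfilling chain for $(\varphi,\beta,w)$ in $H=(W,R,L)$ is a sequence $(w_0,\psi_0),\dots,(w_n,\psi_n)$, $n\ge0$, such that: - each $w_i\in W$, each $\psi_i\in\mathrm{ppre}(\varphi)$, and $\psi_i\in L(w_i)$; - $w_0=w$, $\psi_0=\langle\beta\rangle\varphi$, $\psi_n=\varphi$, and $\psi_i\ne\varphi$ for $i<n$; - for $i<n$: if $\psi_i=\langle a\rangle\chi$ with $a\in\mathrm{APrg}$, then $\psi_{i+1}=\chi$ and $(w_i,w_{i+1})\in R_a$; otherwise $\psi_i\leadsto\psi_{i+1}$ and $w_i=w_{i+1}$. - $\alpha$-formulae with components $(\alpha_1;\alpha_2)$ are: $\varphi\wedge\psi:(\varphi;\psi)$; $[\alpha\cup\beta]\varphi:([\alpha]\varphi;[\beta]\varphi)$;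 $[\alpha^*]\varphi:(\varphi;[\alpha][\alpha^*]\varphi)$; $\langle\psi?\rangle\varphi:(\varphi;\psi)$; $\langle\alpha;\beta\rangle\varphi:(\langle\alpha\rangle\langle\beta\rangle\varphi;\text{none})$; $[\alpha;\beta]\varphi:([\alpha][\beta]\varphi;\text{none})$. - $\beta$-formulae with components $(\beta_1;\beta_2)$ are: $\varphi\vee\psi:(\varphi;\psi)$; $\langle\alpha\cup\beta\rangle\varphi:(\langle\alpha\rangle\varphi;\langle\beta\rangle\varphi)$; $\langle\alpha^*\rangle\varphi:(\varphi;\langle\alpha\rangle\langle\alpha^*\rangle\varphi)$; $[\psi?]\varphi:(\varphi;{\sim}\psi)$. - A Hintikka structure for $\phi$ is a structure for $\phi$ such that for all $w\in W$: - (H1) $\neg p\in L(w)\Rightarrow p\notin L(w)$; - (H2) if an $\alpha$-formula is in $L(w)$ then its component(s) are in $L(w)$; - (H3) if a $\beta$-formula is in $L(w)$ then $\beta_1\in L(w)$ or $\beta_2\in L(w)$; - (H4) $\langle a\rangle\varphi\in L(w)\Rightarrow$ there is $v$ with $(w,v)\in R_a$ and $\varphi\in L(v)$; - (H5) $[a]\varphi\in L(w)\Rightarrow\varphi\in L(v)$ for all $v$ with $(w,v)\in R_a$; - (H6) $\langle\alpha^*\rangle\varphi\in L(w)\Rightarrow$ there is a fulfilling chain for $(\varphi,\alpha^*,w)$ in $H$. Tableau nodes. A node has the form $(\Gamma :: \mathrm{HCr},\mathrm{Nx},\mathrm{BD},\mathrm{BB} :: \mathrm{stat},\mathrm{uev})$,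 where: - $\Gamma$ is a finite set of formulae; - $\mathrm{HCr}$ is a finite list of pairs $(\varphi,\Delta)$ with $\varphi\in\Delta$, with length $\mathrm{len}(\mathrm{HCr})$, $j$-th entry $\mathrm{HCr}[j]$, and concatenation $@$; - $\mathrm{Nx}$ is $\bot$ or a formula; - $\mathrm{BD},\mathrm{BB}$ are sets of formulae; - $\mathrm{stat}\in\{\mathbf{unsat},\mathbf{open},\mathbf{barred}\}$; - $\mathrm{uev}$ is a partial function from pairs ($\langle\rangle$-formula, $\langle{*}\rangle$-formula) to positive integers ($\bot$ = undefined). Auxiliary functions: - $\mathrm{uev}_\bot$ is everywhere undefined. - $\mathrm{tst}(\chi)=\chi$ if $\chi$ is a non-atomic diamond formula, else $\bot$. - $\mathrm{bl}(\chi,\Gamma)=\Gamma$ if $\chi$ is a non-atomic diamond formula, else $\emptyset$. - $\min_\bot(f,g)(\chi_1,\chi_2)$ is undefined if either value is undefined, else the minimum. Rules. The premise set is the displayed principal formula disjointly united with $\Gamma$. Unmentioned histories are copied from parent to children; one-child rules copy the child's $\mathrm{stat}$ to the parent. Terminal rules: - (id): applicable if $\{p,\neg p\}\subseteq\Gamma$; set $\mathrm{stat}:=\mathbf{unsat}$ and $\mathrm{uev}:=\mathrm{uev}_\bot$. - ($\langle*\rangle_2$): premise $\langle\alpha^*\rangle\varphi,\Gamma$ with $\mathrm{Nx}\in\{\bot,\langle\alpha^*\rangle\varphi\}$ and $\langle\alpha^*\rangle\varphi\in\mathrm{BD}$; set $\mathrm{stat}:=\mathbf{barred}$ and $\mathrm{uev}:=\mathrm{uev}_\bot$.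 Linear rules with $\mathrm{Nx}=\bot$, in each of which $\mathrm{uev}(\chi_1,\chi_2)=\mathrm{uev}_1(\chi_1,\chi_2)$ if $\chi_1\in\Gamma$, else $\bot$: - ($\wedge$): $\varphi\wedge\psi,\Gamma$ has the child $\{\varphi,\psi\}\cup\Gamma$; - ($[\cup]$): $[\alpha\cup\beta]\varphi,\Gamma$ has the child $\{[\alpha]\varphi,[\beta]\varphi\}\cup\Gamma$; - ($[;]$): $[\alpha;\beta]\varphi,\Gamma$ has the child $\{[\alpha][\beta]\varphi\}\cup\Gamma$; - ($[*]$): $[\alpha^*]\varphi,\Gamma$ has a child with set $\Gamma$ if $[\alpha^*]\varphi\in\mathrm{BB}$ and $\{\varphi,[\alpha][\alpha^*]\varphi\}\cup\Gamma$ otherwise, and $\mathrm{BB}_1=\{[\alpha^*]\varphi\}\cup\mathrm{BB}$. Further linear rules: - ($\langle;\rangle$): premise $\langle\alpha;\beta\rangle\varphi,\Gamma$ with $\mathrm{Nx}\in\{\bot,\langle\alpha;\beta\rangle\varphi\}$. The child is $\{\langle\alpha\rangle\langle\beta\rangle\varphi\}\cup\Gamma$ with $\mathrm{Nx}_1=\mathrm{tst}(\langle\alpha\rangle\langle\beta\rangle\varphi)$ and $\mathrm{BD}_1=\mathrm{bl}(\langle\alpha\rangle\langle\beta\rangle\varphi,\mathrm{BD})$. Set $\mathrm{uev}(\chi_1,\chi_2)$ to be $\mathrm{uev}_1(\langle\alpha\rangle\langle\beta\rangle\varphi,\chi_2)$ if $\chi_1$ is the principal formula; $\mathrm{uev}_1(\chi_1,\chi_2)$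 if $\chi_1\in\Gamma$; and $\bot$ otherwise. - ($\langle?\rangle$): premise $\langle\psi?\rangle\varphi,\Gamma$ with $\mathrm{Nx}\in\{\bot,\langle\psi?\rangle\varphi\}$. The child is $\{\psi,\varphi\}\cup\Gamma$ with $\mathrm{Nx}_1=\mathrm{tst}(\varphi)$ and $\mathrm{BD}_1=\mathrm{bl}(\varphi,\mathrm{BD})$. Set $\mathrm{uev}(\chi_1,\chi_2)$ to be $\mathrm{uev}_1(\varphi,\chi_2)$ if $\chi_1$ is the principal formula; $\mathrm{uev}_1(\chi_1,\chi_2)$ if $\chi_1\in\Gamma$; and $\bot$ otherwise. Branching rules ($i=1,2$): - ($\vee$): premise $\varphi_1\vee\varphi_2,\Gamma$ with $\mathrm{Nx}=\bot$; children $\{\varphi_i\}\cup\Gamma$. - ($[?]$): premise $[\psi?]\varphi,\Gamma$ with $\mathrm{Nx}=\bot$; children $\{{\sim}\psi\}\cup\Gamma$ and $\{\varphi\}\cup\Gamma$. - For both of these, $\mathrm{uev}'_i(\chi_1,\chi_2)=\mathrm{uev}_i(\chi_1,\chi_2)$ if $\chi_1\in\Gamma$, else $\bot$. - ($\langle\cup\rangle$): premise $\langle\alpha_1\cup\alpha_2\rangle\varphi,\Gamma$ with $\mathrm{Nx}\in\{\bot,\text{principal formula}\}$. The children are $\{\langle\alpha_i\rangle\varphi\}\cup\Gamma$ with $\mathrm{Nx}_i=\mathrm{tst}(\langle\alpha_i\rangle\varphi)$ and $\mathrm{BD}_i=\mathrm{bl}(\langle\alpha_i\rangle\varphi,\mathrm{BD})$.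 Set $\mathrm{uev}'_i(\chi_1,\chi_2)$ to be $\mathrm{uev}_i(\langle\alpha_i\rangle\varphi,\chi_2)$ if $\chi_1$ is the principal formula; $\mathrm{uev}_i(\chi_1,\chi_2)$ if $\chi_1\in\Gamma$; and $\bot$ otherwise. - ($\langle*\rangle_1$): premise $\langle\alpha^*\rangle\varphi,\Gamma$ with $\mathrm{Nx}\in\{\bot,\langle\alpha^*\rangle\varphi\}$ and $\langle\alpha^*\rangle\varphi\notin\mathrm{BD}$. - Child 1 is $\{\varphi\}\cup\Gamma$ with $\mathrm{Nx}_1=\mathrm{tst}(\varphi)$ and $\mathrm{BD}_1=\mathrm{bl}(\varphi,\{\langle\alpha^*\rangle\varphi\}\cup\mathrm{BD})$. - Child 2 is $\{\langle\alpha\rangle\langle\alpha^*\rangle\varphi\}\cup\Gamma$ with $\mathrm{Nx}_2=\mathrm{tst}(\langle\alpha\rangle\langle\alpha^*\rangle\varphi)$ and $\mathrm{BD}_2=\mathrm{bl}(\langle\alpha\rangle\langle\alpha^*\rangle\varphi,\{\langle\alpha^*\rangle\varphi\}\cup\mathrm{BD})$. - $\mathrm{uev}'_1(\chi_1,\chi_2)$ is $\bot$ if $\chi_1=\chi_2=\langle\alpha^*\rangle\varphi$; $\mathrm{uev}_1(\varphi,\chi_2)$ if $\chi_1=\langle\alpha^*\rangle\varphi\ne\chi_2$; $\mathrm{uev}_1(\chi_1,\chi_2)$ if $\chi_1\in\Gamma$; and $\bot$ otherwise. - $\mathrm{uev}'_2(\chi_1,\chi_2)$ is $\mathrm{uev}_2(\langle\alpha\rangle\langle\alpha^*\rangle\varphi,\chi_2)$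 if $\chi_1=\langle\alpha^*\rangle\varphi$; $\mathrm{uev}_2(\chi_1,\chi_2)$ if $\chi_1\in\Gamma$; and $\bot$ otherwise. For all branching rules, the parent's variables are computed as follows. - $\mathrm{stat}=\mathbf{unsat}$ if both children are $\mathbf{unsat}$; $\mathbf{open}$ if some child is $\mathbf{open}$; and $\mathbf{barred}$ otherwise. - $\mathrm{uev}=\mathrm{uev}_\bot$ if $\mathrm{stat}\ne\mathbf{open}$. - Otherwise $\mathrm{uev}=\mathrm{uev}'_i$ if only child $i$ is open, and $\min_\bot(\mathrm{uev}'_1,\mathrm{uev}'_2)$ if both are open. Existential rule ($\langle\rangle$). The premise set is $\{\langle a_1\rangle\varphi_1,\dots,\langle a_{n+m}\rangle\varphi_{n+m}\}\uplus[-]\Delta\uplus\Gamma$, $n+m\ge0$, subject to the following conditions. - Each $a_i\in\mathrm{APrg}$. - $\Gamma$ consists only of atoms and negated atoms, with no $\{p,\neg p\}\subseteq\Gamma$. - $[-]\Delta$ consists only of formulae $[a]\psi$ with $a\in\mathrm{APrg}$. - Let $\Delta_i=\{\psi:[a_i]\psi\in[-]\Delta\}$. For $i\le n$, the pair $(\varphi_i,\{\varphi_i\}\cup\Delta_i)$ is not an entry of $\mathrm{HCr}$. For $n<k\le n+m$, $(\varphi_k,\{\varphi_k\}\cup\Delta_k)=\mathrm{HCr}[j]$ for some $j$. The children, for $i\le n$, are $\{\varphi_i\}\cup\Delta_i$ with $\mathrm{HCr}_i=\mathrm{HCr}\,@\,[(\varphi_i,\{\varphi_i\}\cup\Delta_i)]$,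 $\mathrm{Nx}_i=\mathrm{tst}(\varphi_i)$ and $\mathrm{BD}_i=\mathrm{BB}_i=\emptyset$. The parent's variables are computed as follows. - $\mathrm{stat}=\mathbf{unsat}$ if some $i\le n$ has $\mathrm{stat}_i\ne\mathbf{open}$, or there exist $i\le n$ and a $\langle{*}\rangle$-formula $\psi$ with $\varphi_i\in\mathrm{ppre}(\psi)$ and $\mathrm{uev}_i(\varphi_i,\psi)$ defined and $>\mathrm{len}(\mathrm{HCr})$. Otherwise $\mathrm{stat}=\mathbf{open}$. - For $n<k\le n+m$, $\mathrm{uev}_k$ is constantly $j$, where $\mathrm{HCr}[j]=(\varphi_k,\{\varphi_k\}\cup\Delta_k)$. - $\mathrm{uev}(\chi_1,\chi_2)=\mathrm{uev}_i(\varphi_i,\chi_2)$ if $\mathrm{stat}=\mathbf{open}$, $\chi_2$ is a $\langle{*}\rangle$-formula, $\chi_1\in\mathrm{ppre}(\chi_2)$ and $\chi_1=\langle a_i\rangle\varphi_i$ for some $i\le n+m$. Otherwise $\mathrm{uev}(\chi_1,\chi_2)=\bot$. Tableau. A tableau is a tree of nodes in which the children of each node come from a single application of one applicable rule (free choice), and each parent's $\mathrm{stat}$ and $\mathrm{uev}$ are computed from its children. It is expanded if no rule can be applied to any leaf. *)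

(* Defs.v *)
From Stdlib Require Import List Arith.
Import ListNotations.

Inductive fml : Type :=
| Atom : nat -> fml
| Neg : fml -> fml
| Conj : fml -> fml -> fml
| Disj : fml -> fml -> fml
| Dia : prg -> fml -> fml
| Box : prg -> fml -> fml
with prg : Type :=
| AP : nat -> prg
| Test : fml -> prg
| Seq : prg -> prg -> prg
| Choice : prg -> prg -> prg
| Star : prg -> prg.

Fixpoint is_nnf (f : fml) : Prop :=
  match f with
  | Atom _ => True
  | Neg (Atom _) => True
  | Neg _ => False
  | Conj g h | Disj g h => is_nnf g /\ is_nnf h
  | Dia a g | Box a g => is_nnf_prg a /\ is_nnf g
  end
with is_nnf_prg (a : prg) : Prop :=
  match a with
  | AP _ => True
  | Test g => is_nnf g
  | Seq b c | Choice b c => is_nnf_prg b /\ is_nnf_prg c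
  | Star b => is_nnf_prg b
  end.

Fixpoint nnf (f : fml) : fml :=
  match f with
  | Atom p => Atom p
  | Neg g => nneg g
  | Conj g h => Conj (nnf g) (nnf h)
  | Disj g h => Disj (nnf g) (nnf h)
  | Dia a g => Dia (nnf_prg a) (nnf g)
  | Box a g => Box (nnf_prg a) (nnf g)
  end
with nneg (f : fml) : fml :=
  match f with
  | Atom p => Neg (Atom p)
  | Neg g => nnf g
  | Conj g h => Disj (nneg g) (nneg h)
  | Disj g h => Conj (nneg g) (nneg h)
  | Dia a g => Box (nnf_prg a) (nneg g)
  | Box a g => Dia (nnf_prg a) (nneg g)
  end
with nnf_prg (a : prg) : prg :=
  match a with
  | AP b => AP b
  | Test g => Test (nnf g)
  | Seq b c => Seq (nnf_prg b) (nnf_prg c)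
  | Choice b c => Choice (nnf_prg b) (nnf_prg c)
  | Star b => Star (nnf_prg b)
  end.

Definition sim (f : fml) : fml := nnf (Neg f).

Inductive ppre (phi : fml) : fml -> Prop :=
| ppre_base : ppre phi phi
| ppre_step a psi : ppre phi psi -> ppre phi (Dia a psi).

Definition nadia (x : fml) : bool :=
  match x with Dia (AP _) _ => false | Dia _ _ => true | _ => false end.
Definition star_dia (x : fml) : bool :=
  match x with Dia (Star _) _ => true | _ => false end.
Definition atomic_dia (x : fml) : bool :=
  match x with Dia (AP _) _ => true | _ => false end.

Inductive leadsto : fml -> fml -> Prop :=
| lt_seq a b c : leadsto (Dia (Seq a b) c) (Dia a (Dia b c))
| lt_ch1 a b c : leadsto (Dia (Choice a b) c) (Dia a c)
| lt_ch2 a b c : leadsto (Dia (Choice a b) c) (Dia b c)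
| lt_star0 a c : leadsto (Dia (Star a) c) c
| lt_star1 a c : leadsto (Dia (Star a) c) (Dia a (Dia (Star a) c))
| lt_test t c : leadsto (Dia (Test t) c) c.

Definition fulfilling_chain {W : Type} (R : nat -> W -> W -> Prop)
    (L : W -> fml -> Prop) (phi : fml) (b : prg) (w : W) : Prop :=
  exists (len : nat) (ws : nat -> W) (ps : nat -> fml),
    (forall i, i <= len -> ppre phi (ps i) /\ L (ws i) (ps i)) /\
    ws 0 = w /\ ps 0 = Dia b phi /\ ps len = phi /\
    (forall i, i < len -> ps i <> phi) /\
    (forall i, i < len ->
       match ps i with
       | Dia (AP a) chi => ps (S i) = chi /\ R a (ws i) (ws (S i))
       | _ => leadsto (ps i) (ps (S i)) /\ ws i = ws (S i)
       end).

Definition hintikka {W : Type} (R : nat -> W -> W -> Prop)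
    (L : W -> fml -> Prop) : Prop :=
  forall w : W,
    (* H1 *)
    (forall p, L w (Neg (Atom p)) -> ~ L w (Atom p)) /\
    (* H2: alpha-formulae *)
    (forall f g, L w (Conj f g) -> L w f /\ L w g) /\
    (forall a b f, L w (Box (Choice a b) f) -> L w (Box a f) /\ L w (Box b f)) /\
    (forall a f, L w (Box (Star a) f) -> L w f /\ L w (Box a (Box (Star a) f))) /\
    (forall psi f, L w (Dia (Test psi) f) -> L w f /\ L w psi) /\
    (forall a b f, L w (Dia (Seq a b) f) -> L w (Dia a (Dia b f))) /\
    (forall a b f, L w (Box (Seq a b) f) -> L w (Box a (Box b f))) /\
    (* H3: beta-formulae *)
    (forall f g, L w (Disj f g) -> L w f \/ L w g) /\
    (forall a b f, L w (Dia (Choice a b) f) -> L w (Dia a f) \/ L w (Dia b f)) /\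
    (forall a f, L w (Dia (Star a) f) -> L w f \/ L w (Dia a (Dia (Star a) f))) /\
    (forall psi f, L w (Box (Test psi) f) -> L w f \/ L w (sim psi)) /\
    (* H4 *)
    (forall a f, L w (Dia (AP a) f) -> exists v, R a w v /\ L v f) /\
    (* H5 *)
    (forall a f, L w (Box (AP a) f) -> forall v, R a w v -> L v f) /\
    (* H6 *)
    (forall a f, L w (Dia (Star a) f) -> fulfilling_chain R L f (Star a) w).

Definition hintikka_structure_for (phi : fml) : Prop :=
  exists (W : Type) (R : nat -> W -> W -> Prop) (L : W -> fml -> Prop),
    (exists v, L v phi) /\ hintikka R L.

(* (finite) sets of formulae are represented extensionally as predicates *)
Definition fset := fml -> Prop.
Definition seteq (A B : fset) : Prop := forall x, A x <-> B x.
Definition emptyset : fset := fun _ => False.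
Definition add (x : fml) (G : fset) : fset := fun y => y = x \/ G y.
Definition rest (G : fset) (chi : fml) : fset := fun y => G y /\ y <> chi.

Inductive status := Unsat | Open | Barred.

Record node := mkNode {
  Gam : fset;
  HCr : list (fml * fset);
  Nx : option fml;            (* None = bottom *)
  BD : fset;
  BB : fset;
  stat : status;
  uev : fml -> fml -> option nat  (* None = undefined *)
}.

(* HCr[j], 1-based *)
Definition hcr_at (H : list (fml * fset)) (j : nat) (e : fml * fset) : Prop :=
  1 <= j /\ nth_error H (j - 1) = Some e.
Definition in_hcr (H : list (fml * fset)) (f : fml) (D : fset) : Prop :=
  exists j e, hcr_at H j e /\ fst e = f /\ seteq (snd e) D.

Definition tst (x : fml) : option fml := if nadia x then Some x else None.
Definition bl (x : fml) (G : fset) : fset := fun y => nadia x = true /\ G y.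
Definition nx_ok (n : node) (chi : fml) : Prop := Nx n = None \/ Nx n = Some chi.

Definition min_bot (a b : option nat) : option nat :=
  match a, b with Some x, Some y => Some (Nat.min x y) | _, _ => None end.

Definition branch_stat (s1 s2 : status) : status :=
  match s1, s2 with
  | Unsat, Unsat => Unsat
  | Open, _ => Open
  | _, Open => Open
  | _, _ => Barred
  end.

Definition branch_uev (s1 s2 : status) (v1 v2 : option nat) : option nat :=
  match s1, s2 with
  | Open, Open => min_bot v1 v2
  | Open, _ => v1
  | _, Open => v2
  | _, _ => None
  end.

(* relational specs "v = uev'(x,y)" *)
Definition gam_uev (G : fset) (u : fml -> fml -> option nat) (x y : fml)
    (v : option nat) : Prop :=
  (G x -> v = u x y) /\ (~ G x -> v = None).
Definition pr_uev (chi newf : fml) (G : fset) (u : fml -> fml -> option nat)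
    (x y : fml) (v : option nat) : Prop :=
  (x = chi -> v = u newf y) /\ (G x -> v = u x y) /\
  (x <> chi -> ~ G x -> v = None).
Definition star1_uev (chi f : fml) (G : fset) (u : fml -> fml -> option nat)
    (x y : fml) (v : option nat) : Prop :=
  (x = chi -> y = chi -> v = None) /\
  (x = chi -> y <> chi -> v = u f y) /\
  (G x -> v = u x y) /\
  (x <> chi -> ~ G x -> v = None).

Definition plain_child (n c : node) (S : fset) : Prop :=
  seteq (Gam c) S /\ HCr c = HCr n /\ Nx c = Nx n /\
  seteq (BD c) (BD n) /\ seteq (BB c) (BB n).
Definition dia_child (n c : node) (S : fset) (key : fml) (bd : fset) : Prop :=
  seteq (Gam c) S /\ HCr c = HCr n /\ Nx c = tst key /\
  seteq (BD c) (bl key bd) /\ seteq (BB c) (BB n).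

Definition lit_or_modal (x : fml) : Prop :=
  match x with
  | Atom _ => True
  | Neg (Atom _) => True
  | Dia (AP _) _ => True
  | Box (AP _) _ => True
  | _ => False
  end.
Definition succ_set (n : node) (a : nat) (f : fml) : fset :=
  fun x => x = f \/ Gam n (Box (AP a) x).

Definition dia_bad (n : node) (kids : list ((nat * fml) * node)) : Prop :=
  (exists k c, In (k, c) kids /\ stat c <> Open) \/
  (exists a f c psi v, In ((a, f), c) kids /\ star_dia psi = true /\
     ppre psi f /\ uev c f psi = Some v /\ v > length (HCr n)).

Definition dia_uev (n : node) (kids : list ((nat * fml) * node)) (x y : fml) : Prop :=
  (stat n = Open -> star_dia y = true -> ppre y x ->
    (forall a f c, In ((a, f), c) kids -> x = Dia (AP a) f -> uev n x y = uev c f y) /\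
    (forall a f, Gam n (Dia (AP a) f) -> in_hcr (HCr n) f (succ_set n a f) ->
       x = Dia (AP a) f ->
       exists j e, hcr_at (HCr n) j e /\ fst e = f /\
         seteq (snd e) (succ_set n a f) /\ uev n x y = Some j)) /\
  (~ (stat n = Open /\ star_dia y = true /\ ppre y x /\ Gam n x /\
      atomic_dia x = true) -> uev n x y = None).

(* Tab n : n is the root of a (finite) expanded tableau in which every
   node's stat and uev are computed from its children by the rules. *)
Inductive Tab : node -> Prop :=
| T_id (n : node) (p : nat) :
    Gam n (Atom p) -> Gam n (Neg (Atom p)) ->
    stat n = Unsat -> (forall x y, uev n x y = None) -> Tab n
| T_star2 (n : node) (a : prg) (f : fml) :
    Gam n (Dia (Star a) f) -> nx_ok n (Dia (Star a) f) -> BD n (Dia (Star a) f) ->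
    stat n = Barred -> (forall x y, uev n x y = None) -> Tab n
| T_and (n c : node) (f g : fml) :
    Gam n (Conj f g) -> Nx n = None ->
    plain_child n c (add f (add g (rest (Gam n) (Conj f g)))) ->
    Tab c -> stat n = stat c ->
    (forall x y, gam_uev (rest (Gam n) (Conj f g)) (uev c) x y (uev n x y)) ->
    Tab n
| T_boxch (n c : node) (a b : prg) (f : fml) :
    Gam n (Box (Choice a b) f) -> Nx n = None ->
    plain_child n c (add (Box a f) (add (Box b f) (rest (Gam n) (Box (Choice a b) f)))) ->
    Tab c -> stat n = stat c ->
    (forall x y, gam_uev (rest (Gam n) (Box (Choice a b) f)) (uev c) x y (uev n x y)) ->
    Tab n
| T_boxseq (n c : node) (a b : prg) (f : fml) :
    Gam n (Box (Seq a b) f) -> Nx n = None ->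
    plain_child n c (add (Box a (Box b f)) (rest (Gam n) (Box (Seq a b) f))) ->
    Tab c -> stat n = stat c ->
    (forall x y, gam_uev (rest (Gam n) (Box (Seq a b) f)) (uev c) x y (uev n x y)) ->
    Tab n
| T_boxstar (n c : node) (a : prg) (f : fml) :
    Gam n (Box (Star a) f) -> Nx n = None ->
    (BB n (Box (Star a) f) -> seteq (Gam c) (rest (Gam n) (Box (Star a) f))) ->
    (~ BB n (Box (Star a) f) ->
       seteq (Gam c) (add f (add (Box a (Box (Star a) f)) (rest (Gam n) (Box (Star a) f))))) ->
    HCr c = HCr n -> Nx c = Nx n -> seteq (BD c) (BD n) ->
    seteq (BB c) (add (Box (Star a) f) (BB n)) ->
    Tab c -> stat n = stat c ->
    (forall x y, gam_uev (rest (Gam n) (Box (Star a) f)) (uev c) x y (uev n x y)) ->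
    Tab n
| T_diaseq (n c : node) (a b : prg) (f : fml) :
    Gam n (Dia (Seq a b) f) -> nx_ok n (Dia (Seq a b) f) ->
    dia_child n c (add (Dia a (Dia b f)) (rest (Gam n) (Dia (Seq a b) f)))
      (Dia a (Dia b f)) (BD n) ->
    Tab c -> stat n = stat c ->
    (forall x y, pr_uev (Dia (Seq a b) f) (Dia a (Dia b f))
                   (rest (Gam n) (Dia (Seq a b) f)) (uev c) x y (uev n x y)) ->
    Tab n
| T_diatest (n c : node) (psi f : fml) :
    Gam n (Dia (Test psi) f) -> nx_ok n (Dia (Test psi) f) ->
    dia_child n c (add psi (add f (rest (Gam n) (Dia (Test psi) f)))) f (BD n) ->
    Tab c -> stat n = stat c ->
    (forall x y, pr_uev (Dia (Test psi) f) f
                   (rest (Gam n) (Dia (Test psi) f)) (uev c) x y (uev n x y)) ->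
    Tab n
| T_or (n c1 c2 : node) (f g : fml) :
    Gam n (Disj f g) -> Nx n = None ->
    plain_child n c1 (add f (rest (Gam n) (Disj f g))) ->
    plain_child n c2 (add g (rest (Gam n) (Disj f g))) ->
    Tab c1 -> Tab c2 ->
    stat n = branch_stat (stat c1) (stat c2) ->
    (forall x y, exists v1 v2,
        gam_uev (rest (Gam n) (Disj f g)) (uev c1) x y v1 /\
        gam_uev (rest (Gam n) (Disj f g)) (uev c2) x y v2 /\
        uev n x y = branch_uev (stat c1) (stat c2) v1 v2) ->
    Tab n
| T_boxtest (n c1 c2 : node) (psi f : fml) :
    Gam n (Box (Test psi) f) -> Nx n = None ->
    plain_child n c1 (add (sim psi) (rest (Gam n) (Box (Test psi) f))) ->
    plain_child n c2 (add f (rest (Gam n) (Box (Test psi) f))) ->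
    Tab c1 -> Tab c2 ->
    stat n = branch_stat (stat c1) (stat c2) ->
    (forall x y, exists v1 v2,
        gam_uev (rest (Gam n) (Box (Test psi) f)) (uev c1) x y v1 /\
        gam_uev (rest (Gam n) (Box (Test psi) f)) (uev c2) x y v2 /\
        uev n x y = branch_uev (stat c1) (stat c2) v1 v2) ->
    Tab n
| T_diach (n c1 c2 : node) (a1 a2 : prg) (f : fml) :
    Gam n (Dia (Choice a1 a2) f) -> nx_ok n (Dia (Choice a1 a2) f) ->
    dia_child n c1 (add (Dia a1 f) (rest (Gam n) (Dia (Choice a1 a2) f))) (Dia a1 f) (BD n) ->
    dia_child n c2 (add (Dia a2 f) (rest (Gam n) (Dia (Choice a1 a2) f))) (Dia a2 f) (BD n) ->
    Tab c1 -> Tab c2 ->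
    stat n = branch_stat (stat c1) (stat c2) ->
    (forall x y, exists v1 v2,
        pr_uev (Dia (Choice a1 a2) f) (Dia a1 f)
          (rest (Gam n) (Dia (Choice a1 a2) f)) (uev c1) x y v1 /\
        pr_uev (Dia (Choice a1 a2) f) (Dia a2 f)
          (rest (Gam n) (Dia (Choice a1 a2) f)) (uev c2) x y v2 /\
        uev n x y = branch_uev (stat c1) (stat c2) v1 v2) ->
    Tab n
| T_star1 (n c1 c2 : node) (a : prg) (f : fml) :
    Gam n (Dia (Star a) f) -> nx_ok n (Dia (Star a) f) -> ~ BD n (Dia (Star a) f) ->
    dia_child n c1 (add f (rest (Gam n) (Dia (Star a) f))) f
      (add (Dia (Star a) f) (BD n)) ->
    dia_child n c2 (add (Dia a (Dia (Star a) f)) (rest (Gam n) (Dia (Star a) f)))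
      (Dia a (Dia (Star a) f)) (add (Dia (Star a) f) (BD n)) ->
    Tab c1 -> Tab c2 ->
    stat n = branch_stat (stat c1) (stat c2) ->
    (forall x y, exists v1 v2,
        star1_uev (Dia (Star a) f) f (rest (Gam n) (Dia (Star a) f)) (uev c1) x y v1 /\
        pr_uev (Dia (Star a) f) (Dia a (Dia (Star a) f))
          (rest (Gam n) (Dia (Star a) f)) (uev c2) x y v2 /\
        uev n x y = branch_uev (stat c1) (stat c2) v1 v2) ->
    Tab n
| T_dia (n : node) (kids : list ((nat * fml) * node)) :
    (forall x, Gam n x -> lit_or_modal x) ->
    (forall p, ~ (Gam n (Atom p) /\ Gam n (Neg (Atom p)))) ->
    NoDup (map fst kids) ->
    (forall a f, In (a, f) (map fst kids) <->
       (Gam n (Dia (AP a) f) /\ ~ in_hcr (HCr n) f (succ_set n a f))) ->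
    (forall a f c, In ((a, f), c) kids -> Tab c) ->
    (forall a f c, In ((a, f), c) kids ->
       seteq (Gam c) (succ_set n a f) /\
       HCr c = HCr n ++ [(f, succ_set n a f)] /\
       Nx c = tst f /\ seteq (BD c) emptyset /\ seteq (BB c) emptyset) ->
    (dia_bad n kids -> stat n = Unsat) ->
    (~ dia_bad n kids -> stat n = Open) ->
    (forall x y, dia_uev n kids x y) ->
    Tab n.

(* Main.v *)
Require Import Defs.
From Stdlib Require Import List Arith Lia Classical.
Import ListNotations.

Fixpoint fsize (f : fml) : nat :=
  match f with
  | Atom _ => 1
  | Neg g => S (fsize g)
  | Conj g h | Disj g h => S (fsize g + fsize h)
  | Dia a g | Box a g => S (psize a + fsize g)
  end
with psize (a : prg) : nat :=
  match a with
  | AP _ => 1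
  | Test g => S (fsize g)
  | Seq b c | Choice b c => S (psize b + psize c)
  | Star b => S (psize b)
  end.

Lemma ppre_size phi x : ppre phi x -> fsize phi <= fsize x.
Proof. induction 1; simpl; lia. Qed.

Lemma ppre_trans a b c : ppre a b -> ppre b c -> ppre a c.
Proof. intros H1 H2; induction H2; auto. constructor; auto. Qed.

Lemma ppre_inv phi al z : ppre phi (Dia al z) -> Dia al z = phi \/ ppre phi z.
Proof. intros H; inversion H; subst; auto. Qed.

Lemma ppre_star a f x : ppre (Dia (Star a) f) x -> ppre f x /\ x <> f.
Proof.
  intros H; split.
  - eapply ppre_trans; [|exact H]. constructor; constructor.
  - intros ->. apply ppre_size in H. simpl in H. lia.
Qed.

Lemma ppre_isdia a f x : ppre (Dia a f) x -> exists b y, x = Dia b y.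
Proof. induction 1; eauto. Qed.

Lemma ppre_lit a f x : ppre (Dia (Star a) f) x -> lit_or_modal x ->
  exists b chi, x = Dia (AP b) chi /\ ppre (Dia (Star a) f) chi.
Proof.
  intros H L. pose proof (ppre_isdia _ _ _ H) as [b [y ->]].
  destruct b; simpl in L; try contradiction.
  apply ppre_inv in H as [H|H]; [discriminate|eauto].
Qed.

Definition compG (G : fset) (bbp : Prop) (p : fml) : Prop :=
  match p with
  | Conj f g => G f /\ G g
  | Disj f g => G f \/ G g
  | Box (Choice a b) f => G (Box a f) /\ G (Box b f)
  | Box (Seq a b) f => G (Box a (Box b f))
  | Box (Star a) f => bbp \/ (G f /\ G (Box a (Box (Star a) f)))
  | Box (Test q) f => G f \/ G (sim q)
  | Dia (Seq a b) f => G (Dia a (Dia b f))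
  | Dia (Test q) f => G q /\ G f
  | Dia (Choice a b) f => G (Dia a f) \/ G (Dia b f)
  | Dia (Star a) f => G f \/ G (Dia a (Dia (Star a) f))
  | _ => False
  end.

Lemma compG_mono G G' b b' p : (forall h, G h -> G' h) -> (b -> b') ->
  compG G b p -> compG G' b' p.
Proof. intros HG Hb; destruct p as [?|?|? ?|? ?|q f|q f]; simpl;
  [ | | | | destruct q | destruct q]; simpl; intuition. Qed.

Lemma compG_lit G b p : lit_or_modal p -> ~ compG G b p.
Proof. destruct p as [?|?|? ?|? ?|q f|q f]; simpl;
  [ | | | | destruct q | destruct q]; simpl; tauto. Qed.

Definition is_boxstar (g : fml) : bool :=
  match g with Box (Star _) _ => true | _ => false end.

Definition step (n c : node) : Prop :=
  Tab c /\ stat c = Open /\ HCr c = HCr n /\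
  exists p, Gam n p /\ compG (Gam c) (BB n p) p /\
    (forall g, Gam n g -> g <> p -> Gam c g) /\
    (forall g, BB c g -> BB n g \/ (g = p /\ is_boxstar p = true)).

Definition final (e : node) : Prop :=
  Tab e /\ stat e = Open /\ (forall x, Gam e x -> lit_or_modal x).

Inductive ptail : node -> list node -> node -> Prop :=
| pt_end e : final e -> ptail e [e] e
| pt_step n c l e : step n c -> ptail c l e -> ptail n (n :: l) e.

Definition ctx_ok (H : list (fml * fset)) : Prop :=
  forall j e, hcr_at H j e -> exists c, Tab c /\ stat c = Open /\
    seteq (Gam c) (snd e) /\ HCr c = firstn j H /\ (forall g, ~ BB c g) /\
    (forall psi v, star_dia psi = true -> ppre psi (fst e) ->
       uev c (fst e) psi = Some v -> v < j).

Definition good (p : list node) : Prop :=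
  exists n0 e, ptail n0 p e /\ (forall g, ~ BB n0 g) /\ ctx_ok (HCr n0).

Definition W := { p : list node | good p }.
Definition Lp (p : list node) (g : fml) : Prop := exists n, In n p /\ Gam n g.
Definition LW (w : W) (g : fml) : Prop := Lp (proj1_sig w) g.
Definition RW (a : nat) (w w' : W) : Prop :=
  forall g, LW w (Box (AP a) g) -> LW w' g.

Definition pre_ok (pre : list node) (c : node) : Prop :=
  forall l e, ptail c l e -> good (pre ++ l).

Lemma ptail_head n l e : ptail n l e -> In n l.
Proof. destruct 1; simpl; auto. Qed.

Lemma ptail_last n l e : ptail n l e -> exists l0, l = l0 ++ [e].
Proof. induction 1. exists []; auto. destruct IHptail as [l0 ->]. exists (n :: l0); auto. Qed.

Lemma ptail_HCr n l e : ptail n l e -> HCr e = HCr n.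
Proof. induction 1; auto. destruct H as (_&_&H&_). congruence. Qed.

Lemma ptail_final n l e : ptail n l e -> final e.
Proof. induction 1; auto. Qed.

Lemma ptail_suffix n0 p e : ptail n0 p e -> forall m, In m p ->
  exists pre l, p = pre ++ l /\ ptail m l e.
Proof.
  induction 1; intros m Hm.
  - destruct Hm as [<-|[]]. exists [], [e]; split; auto. constructor; auto.
  - destruct Hm as [<-|Hm].
    + exists [], (n :: l); split; auto. econstructor; eauto.
    + destruct (IHptail m Hm) as (pre&l'&->&Ht). exists (n :: pre), l'; auto.
Qed.

Lemma final_nostep e c : final e -> ~ step e c.
Proof.
  intros (_&_&Hl) (_&_&_&p&Hp&Hc&_). apply (compG_lit _ _ p (Hl _ Hp) Hc).
Qed.

Lemma final_ptail e l e' : final e -> ptail e l e' -> l = [e] /\ e' = e.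
Proof.
  intros Hf H; inversion H; subst; auto. exfalso; eapply final_nostep; eauto.
Qed.

Lemma proc n l e : ptail n l e -> forall g, Gam n g ->
  (exists m c, In m l /\ In c l /\ Gam m g /\ compG (Gam c) (BB m g) g) \/ Gam e g.
Proof.
  induction 1; intros g Hg; auto.
  destruct H as (Hc&_&_&p&Hp&Hcomp&Hrest&_).
  destruct (classic (g = p)) as [->|Hne].
  - left. exists n, c; repeat split; simpl; auto. right; eapply ptail_head; eauto.
  - destruct (IHptail g (Hrest g Hg Hne)) as [(m&c'&H1&H2&H3&H4)|H]; auto.
    left; exists m, c'; simpl; auto.
Qed.

Definition bbcL (p : list node) (g : fml) : Prop :=
  match g with Box (Star a) f => Lp p f /\ Lp p (Box a (Box (Star a) f)) | _ => False end.

Lemma bbcL_mono p p' g : incl p p' -> bbcL p g -> bbcL p' g.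
Proof.
  intros Hi. destruct g as [?|?|? ?|? ?|? ?|q f]; simpl; auto; destruct q; simpl; auto.
  intros [(m&Hm&H1) (m'&Hm'&H2)]; split; [exists m|exists m']; auto.
Qed.

Lemma bb_inv n0 p e : ptail n0 p e -> forall m g, In m p -> BB m g -> BB n0 g \/ bbcL p g.
Proof.
  induction 1; intros m g Hm Hb.
  - destruct Hm as [<-|[]]; auto.
  - destruct Hm as [<-|Hm]; auto.
    destruct (IHptail m g Hm Hb) as [Hc|Hc].
    + destruct H as (_&_&_&q&Hq&Hcomp&_&Hbb).
      destruct (Hbb g Hc) as [|[-> Hs]]; auto.
      destruct q as [?|?|? ?|? ?|? ?|r f]; try discriminate; destruct r; try discriminate.
      simpl in Hcomp. destruct Hcomp as [|[H1 H2]]; auto.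
      right; simpl; split; eexists; split; eauto; right; eapply ptail_head; eauto.
    + right; eapply bbcL_mono; [|exact Hc]. intros x; simpl; auto.
Qed.

Lemma final_inv e : final e -> exists kids,
    (forall p, ~ (Gam e (Atom p) /\ Gam e (Neg (Atom p)))) /\
    (forall a f, In (a, f) (map fst kids) <->
       (Gam e (Dia (AP a) f) /\ ~ in_hcr (HCr e) f (succ_set e a f))) /\
    (forall a f c, In ((a, f), c) kids -> Tab c) /\
    (forall a f c, In ((a, f), c) kids ->
       seteq (Gam c) (succ_set e a f) /\
       HCr c = HCr e ++ [(f, succ_set e a f)] /\
       Nx c = tst f /\ seteq (BD c) emptyset /\ seteq (BB c) emptyset) /\
    (dia_bad e kids -> stat e = Unsat) /\
    (forall x y, dia_uev e kids x y).
Proof.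
  intros (Ht & Hs & Hl). destruct Ht;
  try (exfalso; match goal with H : Gam _ ?x |- _ => specialize (Hl _ H); simpl in Hl; exact Hl end).
  - congruence.
  - exists kids; split; [auto|split;[auto|split;[auto|split;[auto|split;auto]]]].
Qed.

Lemma good_of (w : W) : exists n0 e, ptail n0 (proj1_sig w) e /\ (forall g, ~ BB n0 g) /\ ctx_ok (HCr n0).
Proof. exact (proj2_sig w). Qed.

Lemma sat_W (w : W) g : LW w g -> ~ lit_or_modal g -> compG (LW w) (bbcL (proj1_sig w) g) g.
Proof.
  intros (m & Hm & Hg) Hnl.
  destruct (good_of w) as (n0 & e & Ht & Hbb & _).
  destruct (ptail_suffix _ _ _ Ht m Hm) as (pre & l & Heq & Ht').
  destruct (proc _ _ _ Ht' g Hg) as [(m'&c&H1&H2&H3&H4)|H].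
  - eapply compG_mono; [| |exact H4].
    + intros h Hh. exists c; split; auto. rewrite Heq; apply in_or_app; auto.
    + intros Hb. assert (In m' (proj1_sig w)) by (rewrite Heq; apply in_or_app; auto).
      destruct (bb_inv _ _ _ Ht m' g H Hb) as [Hc|Hc]; [exfalso; eapply Hbb; eauto|auto].
  - exfalso. apply Hnl. destruct (ptail_final _ _ _ Ht') as (_&_&Hl). auto.
Qed.

Lemma lit_end (w : W) n0 e g : ptail n0 (proj1_sig w) e -> LW w g -> lit_or_modal g -> Gam e g.
Proof.
  intros Ht (m & Hm & Hg) Hl.
  destruct (ptail_suffix _ _ _ Ht m Hm) as (pre & l & Heq & Ht').
  destruct (proc _ _ _ Ht' g Hg) as [(m'&c&H1&H2&H3&H4)|H]; auto.
  exfalso; eapply compG_lit; eauto.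
Qed.

Lemma mk_step n c p S : Tab c -> stat c = Open -> HCr c = HCr n -> Gam n p ->
  seteq (Gam c) S -> (forall g, Gam n g -> g <> p -> S g) ->
  (forall g, BB c g -> BB n g \/ (g = p /\ is_boxstar p = true)) ->
  compG (Gam c) (BB n p) p -> step n c.
Proof.
  intros; repeat split; auto. exists p; repeat split; auto.
  intros g Hg Hne; apply H3; auto.
Qed.

Ltac inS HS := apply (proj2 (HS _)); cbv [add]; first [left; reflexivity | right; left; reflexivity].

Lemma bbsame n c p : seteq (BB c) (BB n) ->
  forall g, BB c g -> BB n g \/ (g = p /\ is_boxstar p = true).
Proof. intros H g Hg; left; apply H; auto. Qed.

Ltac comp_tac HG := first [split; inS HG | left; inS HG | right; inS HG | inS HG].

Ltac plain_step p :=
  match goal with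
  | Hp : plain_child ?n ?c ?S |- step ?n ?c =>
      let HG := fresh in let HH := fresh in let HN := fresh in let HD := fresh in
      let HB := fresh in
      destruct Hp as (HG & HH & HN & HD & HB);
      eapply (mk_step n c p S); [auto | congruence | auto | auto | exact HG
        | intros; cbv [add rest]; intuition
      | apply bbsame; auto | simpl; comp_tac HG ]
  | Hp : dia_child ?n ?c ?S _ _ |- step ?n ?c =>
      let HG := fresh in let HH := fresh in let HN := fresh in let HD := fresh in
      let HB := fresh in
      destruct Hp as (HG & HH & HN & HD & HB);
      eapply (mk_step n c p S); [auto | congruence | auto | auto | exact HG
        | intros; cbv [add rest]; intuition
      | apply bbsame; auto | simpl; comp_tac HG ]
  end.

Lemma bs_open s1 s2 : branch_stat s1 s2 = Open -> s1 = Open \/ s2 = Open.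
Proof. destruct s1, s2; simpl; auto; discriminate. Qed.

Lemma exist_world c : Tab c -> stat c = Open -> exists l e, ptail c l e.
Proof.
  induction 1; intros Ho; try congruence.
  - destruct IHTab as (l&e&Hl); [congruence|]. exists (n :: l), e. econstructor; eauto.
    plain_step (Conj f g).
  - destruct IHTab as (l&e&Hl); [congruence|]. exists (n :: l), e. econstructor; eauto.
    plain_step (Box (Choice a b) f).
  - destruct IHTab as (l&e&Hl); [congruence|]. exists (n :: l), e. econstructor; eauto.
    plain_step (Box (Seq a b) f).
  - destruct IHTab as (l&e&Hl); [congruence|]. exists (n :: l), e. econstructor; eauto.
    destruct (classic (BB n (Box (Star a) f))) as [Hb|Hb].
    + eapply (mk_step n c (Box (Star a) f) (rest (Gam n) (Box (Star a) f)));
        [auto | congruence | auto | auto | exact (H1 Hb) | | | ].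
      * intros; cbv [rest]; auto.
      * intros g Hg; apply H6 in Hg; destruct Hg; auto.
      * simpl; auto.
    + specialize (H2 Hb).
      eapply (mk_step n c (Box (Star a) f)); [auto | congruence | auto | auto | exact H2 | | | ].
      * intros; cbv [add rest]; auto.
      * intros g Hg; apply H6 in Hg; destruct Hg; auto.
      * simpl; right; split; inS H2.
  - destruct IHTab as (l&e&Hl); [congruence|]. exists (n :: l), e. econstructor; eauto.
    plain_step (Dia (Seq a b) f).
  - destruct IHTab as (l&e&Hl); [congruence|]. exists (n :: l), e. econstructor; eauto.
    plain_step (Dia (Test psi) f).
  - match goal with Hs : stat n = branch_stat _ _ |- _ => rewrite Hs in Ho end. destruct (bs_open _ _ Ho) as [Hs|Hs].
    + destruct (IHTab1 Hs) as (l&e&Hl). exists (n :: l), e. econstructor; eauto. plain_step (Disj f g).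
    + destruct (IHTab2 Hs) as (l&e&Hl). exists (n :: l), e. econstructor; eauto. plain_step (Disj f g).
  - match goal with Hs : stat n = branch_stat _ _ |- _ => rewrite Hs in Ho end. destruct (bs_open _ _ Ho) as [Hs|Hs].
    + destruct (IHTab1 Hs) as (l&e&Hl). exists (n :: l), e. econstructor; eauto. plain_step (Box (Test psi) f).
    + destruct (IHTab2 Hs) as (l&e&Hl). exists (n :: l), e. econstructor; eauto. plain_step (Box (Test psi) f).
  - match goal with Hs : stat n = branch_stat _ _ |- _ => rewrite Hs in Ho end. destruct (bs_open _ _ Ho) as [Hs|Hs].
    + destruct (IHTab1 Hs) as (l&e&Hl). exists (n :: l), e. econstructor; eauto. plain_step (Dia (Choice a1 a2) f).
    + destruct (IHTab2 Hs) as (l&e&Hl). exists (n :: l), e. econstructor; eauto. plain_step (Dia (Choice a1 a2) f).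
  - match goal with Hs : stat n = branch_stat _ _ |- _ => rewrite Hs in Ho end. destruct (bs_open _ _ Ho) as [Hs|Hs].
    + destruct (IHTab1 Hs) as (l&e&Hl). exists (n :: l), e. econstructor; eauto. plain_step (Dia (Star a) f).
    + destruct (IHTab2 Hs) as (l&e&Hl). exists (n :: l), e. econstructor; eauto. plain_step (Dia (Star a) f).
  - exists [n], n. constructor. repeat split; auto. eapply T_dia; eauto.
Qed.

Inductive reach (f : fml) : W -> fml -> Prop :=
| r_end w : LW w f -> reach f w f
| r_atom w w' b chi : LW w (Dia (AP b) chi) -> Dia (AP b) chi <> f ->
    ppre f (Dia (AP b) chi) -> RW b w w' -> reach f w' chi -> reach f w (Dia (AP b) chi)
| r_lead w x y : LW w x -> x <> f -> ppre f x -> leadsto x y -> reach f w y -> reach f w x.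

Lemma reach_chain f w x : reach f w x -> exists len (ws : nat -> W) ps,
    (forall i, i <= len -> ppre f (ps i) /\ LW (ws i) (ps i)) /\
    ws 0 = w /\ ps 0 = x /\ ps len = f /\
    (forall i, i < len -> ps i <> f) /\
    (forall i, i < len ->
       match ps i with
       | Dia (AP a) chi => ps (S i) = chi /\ RW a (ws i) (ws (S i))
       | _ => leadsto (ps i) (ps (S i)) /\ ws i = ws (S i)
       end).
Proof.
  induction 1.
  - exists 0, (fun _ => w), (fun _ => f).
    refine (conj _ (conj eq_refl (conj eq_refl (conj eq_refl (conj _ _))))); intros; try lia.
    split; auto; constructor.
  - destruct IHreach as (len & ws & ps & K1 & K2 & K3 & K4 & K5 & K6).
    exists (S len), (fun i => match i with 0 => w | S k => ws k end),
      (fun i => match i with 0 => Dia (AP b) chi | S k => ps k end).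
    refine (conj _ (conj eq_refl (conj eq_refl (conj _ (conj _ _))))); auto.
    + intros [|i] Hi; auto. apply K1; lia.
    + intros [|i] Hi; auto. apply K5; lia.
    + intros [|i] Hi; simpl; [split; [exact K3|rewrite K2; exact H2]|apply (K6 i); lia].
  - destruct IHreach as (len & ws & ps & K1 & K2 & K3 & K4 & K5 & K6).
    exists (S len), (fun i => match i with 0 => w | S k => ws k end),
      (fun i => match i with 0 => x | S k => ps k end).
    refine (conj _ (conj eq_refl (conj eq_refl (conj _ (conj _ _))))); auto.
    + intros [|i] Hi; auto. apply K1; lia.
    + intros [|i] Hi; auto. apply K5; lia.
    + intros [|i] Hi; simpl; [|apply (K6 i); lia].
      assert (Hl : leadsto x (ps 0)) by congruence. rewrite <- K2.
      destruct x as [?|?|? ?|? ?|q ?|? ?]; try (inversion Hl; fail).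
      destruct q; try (inversion Hl; fail); simpl; auto.
Qed.

Lemma ctx_firstn H j : ctx_ok H -> ctx_ok (firstn j H).
Proof.
  intros Hc i e [Hi He]. rewrite nth_error_firstn in He.
  destruct (Nat.ltb_spec (i-1) j) as [Hl|]; [|discriminate].
  destruct (Hc i e (conj Hi He)) as (c & H1 & H2 & H3 & H4 & H5 & H6).
  exists c; do 3 (split; [auto|]); split; [|split; auto]. rewrite H4, firstn_firstn. f_equal; lia.
Qed.

Lemma ctx_app H e k : ctx_ok H -> Tab k -> stat k = Open -> seteq (Gam k) (snd e) ->
  HCr k = H ++ [e] -> (forall g, ~ BB k g) ->
  (forall psi v, star_dia psi = true -> ppre psi (fst e) -> uev k (fst e) psi = Some v ->
     v < S (length H)) -> ctx_ok (H ++ [e]).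
Proof.
  intros Hc Hk Ho Hg Hh Hb Hu j e' [Hj He].
  destruct (Nat.ltb_spec (j-1) (length H)) as [Hl|Hl].
  - rewrite nth_error_app1 in He by auto.
    destruct (Hc j e' (conj Hj He)) as (c & H1 & H2 & H3 & H4 & H5 & H6).
    exists c; do 3 (split; [auto|]); split; [|split; auto]. rewrite firstn_app, H4.
    replace (j - length H) with 0 by lia. simpl. rewrite app_nil_r; auto.
  - rewrite nth_error_app2 in He by auto.
    destruct (j - 1 - length H) eqn:E; simpl in He; [|destruct n; discriminate].
    injection He as <-. exists k; do 3 (split; [auto|]); split; [|split; auto].
    + rewrite firstn_all2; auto. rewrite length_app; simpl; lia.
    + intros psi v H1 H2 H3. specialize (Hu psi v H1 H2 H3). lia.
Qed.

Lemma branch_pick s1 s2 v1 v2 N : branch_stat s1 s2 = Open ->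
  (forall v, branch_uev s1 s2 v1 v2 = Some v -> v < N) ->
  (s1 = Open /\ forall v, v1 = Some v -> v < N) \/ (s2 = Open /\ forall v, v2 = Some v -> v < N).
Proof.
  intros Hs Hb. destruct s1, s2; simpl in *; try discriminate; auto.
  destruct v1 as [n1|], v2 as [n2|]; simpl in Hb.
  - destruct (Nat.le_ge_cases n1 n2).
    + left; split; auto; intros v E; injection E as <-; apply Hb; f_equal; lia.
    + right; split; auto; intros v E; injection E as <-; apply Hb; f_equal; lia.
  - right; split; auto; discriminate.
  - left; split; auto; discriminate.
  - left; split; auto; discriminate.
Qed.

Definition wext (w : W) pre c := exists l e, proj1_sig w = pre ++ l /\ ptail c l e.

Lemma pre_ext pre n c : pre_ok pre n -> step n c -> pre_ok (pre ++ [n]) c.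
Proof. intros Hp Hs l e Ht. rewrite <- app_assoc. simpl. apply (Hp _ e). econstructor; eauto. Qed.

Lemma wext_ext w pre n c : step n c -> wext w (pre ++ [n]) c -> wext w pre n.
Proof.
  intros Hs (l & e & E & Ht). exists (n :: l), e. split.
  rewrite E, <- app_assoc; auto. econstructor; eauto.
Qed.

Lemma wext_L w pre c x : wext w pre c -> Gam c x -> LW w x.
Proof.
  intros (l & e & E & Ht) Hx. exists c; split; auto. rewrite E. apply in_or_app; right.
  eapply ptail_head; eauto.
Qed.

Lemma mkW pre c l e : pre_ok pre c -> ptail c l e -> exists w, wext w pre c.
Proof. intros Hp Ht. exists (exist _ (pre ++ l) (Hp l e Ht)). exists l, e; auto. Qed.

Definition Qnode a0 f0 N c := stat c = Open -> forall x pre, pre_ok pre c -> ctx_ok (HCr c) ->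
  Gam c x -> ppre (Dia (Star a0) f0) x ->
  (forall v, uev c x (Dia (Star a0) f0) = Some v -> v < N) ->
  exists w, wext w pre c /\ reach f0 w x.

Lemma move_same a0 f0 N pre n c x : step n c -> Qnode a0 f0 N c -> pre_ok pre n ->
  ctx_ok (HCr n) -> Gam c x -> ppre (Dia (Star a0) f0) x ->
  (forall v, uev c x (Dia (Star a0) f0) = Some v -> v < N) ->
  exists w, wext w pre n /\ reach f0 w x.
Proof.
  intros Hs HQ Hp Hc Hx Hpp Hb. pose proof Hs as (_&Ho&Hh&_).
  destruct (HQ Ho x (pre ++ [n])) as (w & Hw & Hr); auto.
  - apply pre_ext; auto.
  - rewrite Hh; auto.
  - exists w; split; auto. eapply wext_ext; eauto.
Qed.

Lemma move_lead a0 f0 N pre n c x y : step n c -> Qnode a0 f0 N c -> pre_ok pre n ->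
  ctx_ok (HCr n) -> Gam n x -> ppre (Dia (Star a0) f0) x -> leadsto x y ->
  Gam c y -> ppre (Dia (Star a0) f0) y ->
  (forall v, uev c y (Dia (Star a0) f0) = Some v -> v < N) ->
  exists w, wext w pre n /\ reach f0 w x.
Proof.
  intros Hs HQ Hp Hc Hx Hpp Hl Hy Hpy Hb.
  destruct (move_same _ _ _ _ _ _ _ Hs HQ Hp Hc Hy Hpy Hb) as (w & Hw & Hr).
  exists w; split; auto. apply ppre_star in Hpp as [H1 H2].
  eapply r_lead; eauto. eapply wext_L; eauto.
Qed.

Lemma move_end a0 f0 pre n c x : step n c -> pre_ok pre n -> Gam n x ->
  ppre (Dia (Star a0) f0) x -> leadsto x f0 -> Gam c f0 ->
  exists w, wext w pre n /\ reach f0 w x.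
Proof.
  intros Hs Hp Hx Hpp Hl Hf. pose proof Hs as (Ht&Ho&_).
  destruct (exist_world c Ht Ho) as (l & e & Hte).
  destruct (mkW (pre ++ [n]) c l e (pre_ext _ _ _ Hp Hs) Hte) as [w Hw].
  exists w; split; [eapply wext_ext; eauto|].
  apply ppre_star in Hpp as [H1 H2].
  assert (Hwn: wext w pre n) by (eapply wext_ext; eauto).
  eapply r_lead with (y := f0); [eapply wext_L; eauto | exact H2 | exact H1 | exact Hl |].
  constructor; exact (wext_L _ _ _ _ Hw Hf).
Qed.

Lemma step_boxstar n c a f : Gam n (Box (Star a) f) ->
    (BB n (Box (Star a) f) -> seteq (Gam c) (rest (Gam n) (Box (Star a) f))) ->
    (~ BB n (Box (Star a) f) ->
       seteq (Gam c) (add f (add (Box a (Box (Star a) f)) (rest (Gam n) (Box (Star a) f))))) ->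
    HCr c = HCr n -> seteq (BB c) (add (Box (Star a) f) (BB n)) ->
    Tab c -> stat c = Open -> step n c.
Proof.
  intros H H1 H2 H3 H6 Ht Ho.
  destruct (classic (BB n (Box (Star a) f))) as [Hb|Hb].
  + eapply (mk_step n c (Box (Star a) f) (rest (Gam n) (Box (Star a) f)));
      [auto | congruence | auto | auto | exact (H1 Hb) | | | ].
    * intros; cbv [rest]; auto.
    * intros g Hg; apply H6 in Hg; destruct Hg; auto.
    * simpl; auto.
  + specialize (H2 Hb).
    eapply (mk_step n c (Box (Star a) f)); [auto | congruence | auto | auto | exact H2 | | | ].
    * intros; cbv [add rest]; auto.
    * intros g Hg; apply H6 in Hg; destruct Hg; auto.
    * simpl; right; split; inS H2.
Qed.

Lemma dia_case a0 f0 N n kids pre x :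
  Tab n -> stat n = Open ->
  (forall y, Gam n y -> lit_or_modal y) ->
  (forall a f, In (a, f) (map fst kids) <->
       (Gam n (Dia (AP a) f) /\ ~ in_hcr (HCr n) f (succ_set n a f))) ->
  (forall a f c, In ((a, f), c) kids -> Tab c) ->
  (forall a f c, In ((a,f),c) kids -> seteq (Gam c) (succ_set n a f) /\
       HCr c = HCr n ++ [(f, succ_set n a f)] /\ Nx c = tst f /\
       seteq (BD c) emptyset /\ seteq (BB c) emptyset) ->
  (dia_bad n kids -> stat n = Unsat) ->
  (forall x y, dia_uev n kids x y) ->
  (forall a f c, In ((a,f),c) kids -> Qnode a0 f0 N c) ->
  (forall j, j < N -> forall c, Tab c -> Qnode a0 f0 j c) ->
  pre_ok pre n -> ctx_ok (HCr n) -> Gam n x -> ppre (Dia (Star a0) f0) x ->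
  (forall v, uev n x (Dia (Star a0) f0) = Some v -> v < N) ->
  exists w, wext w pre n /\ reach f0 w x.
Proof.
  intros Htab Ho Hlit Hiff Hkt Hkp Hbad Hdu IHk IHN Hpre Hctx Hx Hpp Hbd.
  destruct (ppre_lit _ _ _ Hpp (Hlit _ Hx)) as (b & chi & -> & Hpc).
  assert (Hfin : final n) by (repeat split; auto).
  destruct (mkW pre n [n] n Hpre (pt_end _ Hfin)) as [w Hw].
  assert (Hbox : forall g, LW w (Box (AP b) g) -> Gam n (Box (AP b) g)).
  { intros g Hg. destruct (good_of w) as (n0 & e & Ht & _ & _).
    pose proof (lit_end _ _ _ _ Ht Hg I) as He.
    destruct (ptail_last _ _ _ Ht) as [l0 E].
    destruct Hw as (l & e' & E' & Ht').
    destruct (final_ptail _ _ _ Hfin Ht') as [-> ->].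
    rewrite E' in E. apply app_inj_tail in E as [_ <-]. auto. }
  assert (Hnb : ~ dia_bad n kids) by (intro Hd; specialize (Hbad Hd); congruence).
  destruct (ppre_star _ _ _ Hpp) as [Hpf Hnf].
  destruct (Hdu (Dia (AP b) chi) (Dia (Star a0) f0)) as [Hdu1 _].
  destruct (Hdu1 Ho eq_refl Hpp) as [Hdk Hdl].
  destruct (classic (In (b, chi) (map fst kids))) as [Hin|Hnin].
  - apply in_map_iff in Hin as [[[b' chi'] k] [E Hk]]. simpl in E. injection E as -> ->.
    destruct (Hkp _ _ _ Hk) as (Hkg & Hkh & _ & _ & Hkb).
    assert (Hko : stat k = Open).
    { destruct (classic (stat k = Open)) as [|Hn]; auto. exfalso; apply Hnb.
      left; exists (b, chi), k; auto. }
    assert (Hkc : ctx_ok (HCr k)).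
    { rewrite Hkh. eapply (ctx_app _ _ k); eauto.
      - intros g Hg; apply Hkb in Hg; destruct Hg.
      - intros psi v H1 H2 H3; simpl in *.
        destruct (Nat.le_gt_cases v (length (HCr n))) as [|Hg]; [lia|].
        exfalso; apply Hnb; right; exists b, chi, k, psi, v; auto. }
    destruct (IHk _ _ _ Hk Hko chi [] ) as (w' & Hw' & Hr).
    + intros l e Ht. exists k, e; split; [exact Ht|split; auto].
      intros g Hg; apply Hkb in Hg; destruct Hg.
    + exact Hkc.
    + apply Hkg; left; auto.
    + exact Hpc.
    + intros v Hv; apply Hbd. rewrite (Hdk _ _ _ Hk eq_refl); auto.
    + exists w; split; auto. eapply r_atom; eauto.
      * eapply wext_L; eauto.
      * intros g Hg. apply Hbox in Hg. eapply wext_L; eauto. apply Hkg. right; auto.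
  - assert (Hih : in_hcr (HCr n) chi (succ_set n b chi)).
    { apply NNPP; intro Hn; apply Hnin, Hiff; auto. }
    destruct (Hdl b chi Hx Hih eq_refl) as (j & e0 & Hj & Hfe & Hse & Hu).
    destruct (Hctx j e0 Hj) as (cj & Ht1 & Ho1 & Hg1 & Hh1 & Hb1 & Hu1).
    assert (HjN : j < N) by (apply Hbd; auto).
    destruct (IHN j HjN cj Ht1 Ho1 chi []) as (w' & Hw' & Hr).
    + intros l e Ht. exists cj, e; split; [exact Ht|split; auto].
      rewrite Hh1; apply ctx_firstn; auto.
    + rewrite Hh1; apply ctx_firstn; auto.
    + apply Hg1, Hse; left; auto.
    + exact Hpc.
    + intros v Hv. subst chi. eapply Hu1; eauto; reflexivity.
    + exists w; split; auto. eapply r_atom; eauto.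
      * eapply wext_L; eauto.
      * intros g Hg. apply Hbox in Hg. eapply wext_L; eauto. apply Hg1, Hse. right; auto.
Qed.

Ltac msame c IH := match goal with Hst : step _ c, Hpre : pre_ok _ _, Hctx : ctx_ok _,
  Hpp : ppre _ _ |- _ => apply (move_same _ _ _ _ _ c _ Hst IH Hpre Hctx); [|exact Hpp|] end.
Ltac mlead c y IH := match goal with Hst : step _ c, Hpre : pre_ok _ _, Hctx : ctx_ok _,
  Hpp : ppre _ _, Hx : Gam _ _ |- _ =>
  apply (move_lead _ _ _ _ _ c _ y Hst IH Hpre Hctx Hx Hpp) end.
Ltac gamc Hp := apply (proj1 Hp); cbv [add rest]; tauto.

Lemma notdia_ne a0 f0 x p : ppre (Dia (Star a0) f0) x ->
  (forall b y, p <> Dia b y) -> x <> p.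
Proof. intros H Hp ->. destruct (ppre_isdia _ _ _ H) as (b&y&E). eapply Hp; eauto. Qed.

Lemma Qlem a0 f0 : forall N c, Tab c -> Qnode a0 f0 N c.
Proof.
  intros N. induction N as [N IHN] using (well_founded_induction lt_wf).
  intros c Hc. induction Hc; intros Ho x pre Hpre Hctx Hx Hpp Hbd.
  - congruence.
  - congruence.
  -
    assert (Hst : step n c) by plain_step (Conj f g).
    assert (Hne : x <> Conj f g) by (apply (notdia_ne a0 f0); auto; discriminate).
    msame c IHHc. gamc H1.
    intros v Hv; apply Hbd. rewrite (proj1 (H3 x _)); auto. split; auto.
  - assert (Hst : step n c) by plain_step (Box (Choice a b) f).
    assert (Hne : x <> Box (Choice a b) f) by (apply (notdia_ne a0 f0); auto; discriminate).
    msame c IHHc. gamc H1.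
    intros v Hv; apply Hbd. rewrite (proj1 (H3 x _)); auto. split; auto.
  - assert (Hst : step n c) by plain_step (Box (Seq a b) f).
    assert (Hne : x <> Box (Seq a b) f) by (apply (notdia_ne a0 f0); auto; discriminate).
    msame c IHHc. gamc H1.
    intros v Hv; apply Hbd. rewrite (proj1 (H3 x _)); auto. split; auto.
  - assert (Hst : step n c) by (eapply step_boxstar; eauto; congruence).
    assert (Hne : x <> Box (Star a) f) by (apply (notdia_ne a0 f0); auto; discriminate).
    msame c IHHc.
    + destruct (classic (BB n (Box (Star a) f))) as [Hb|Hb];
        [apply (H1 Hb) | apply (H2 Hb)]; cbv [add rest]; tauto.
    + intros v Hv; apply Hbd. rewrite (proj1 (H8 x _)); auto. split; auto.
  -
    assert (Hst : step n c) by plain_step (Dia (Seq a b) f).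
    destruct (H3 x (Dia (Star a0) f0)) as (U1 & U2 & _).
    destruct (classic (x = Dia (Seq a b) f)) as [->|Hne].
    + mlead c (Dia a (Dia b f)) IHHc; [constructor | gamc H1 | |].
      * apply ppre_inv in Hpp as [E|E]; [discriminate|]. do 2 constructor; auto.
      * intros v Hv; apply Hbd. rewrite U1; auto.
    + msame c IHHc. gamc H1.
      intros v Hv; apply Hbd. rewrite U2; auto. split; auto.
  -
    assert (Hst : step n c) by plain_step (Dia (Test psi) f).
    destruct (H3 x (Dia (Star a0) f0)) as (U1 & U2 & _).
    destruct (classic (x = Dia (Test psi) f)) as [->|Hne].
    + mlead c f IHHc; [constructor | gamc H1 | |].
      * apply ppre_inv in Hpp as [E|E]; [discriminate|]. auto.
      * intros v Hv; apply Hbd. rewrite U1; auto.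
    + msame c IHHc. gamc H1.
      intros v Hv; apply Hbd. rewrite U2; auto. split; auto.
  -
    assert (Hne : x <> Disj f g) by (apply (notdia_ne a0 f0); auto; discriminate).
    destruct (H4 x (Dia (Star a0) f0)) as (v1 & v2 & G1 & G2 & E).
    rewrite (proj1 G1) in E by (split; auto). rewrite (proj1 G2) in E by (split; auto).
    rewrite H3 in Ho. rewrite E in Hbd.
    destruct (branch_pick _ _ _ _ _ Ho Hbd) as [[Hs Hb]|[Hs Hb]].
    + assert (Hst : step n c1) by plain_step (Disj f g).
      msame c1 IHHc1. gamc H1. auto.
    + assert (Hst : step n c2) by plain_step (Disj f g).
      msame c2 IHHc2. gamc H2. auto.
  -
    assert (Hne : x <> Box (Test psi) f) by (apply (notdia_ne a0 f0); auto; discriminate).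
    destruct (H4 x (Dia (Star a0) f0)) as (v1 & v2 & G1 & G2 & E).
    rewrite (proj1 G1) in E by (split; auto). rewrite (proj1 G2) in E by (split; auto).
    rewrite H3 in Ho. rewrite E in Hbd.
    destruct (branch_pick _ _ _ _ _ Ho Hbd) as [[Hs Hb]|[Hs Hb]].
    + assert (Hst : step n c1) by plain_step (Box (Test psi) f).
      msame c1 IHHc1. gamc H1. auto.
    + assert (Hst : step n c2) by plain_step (Box (Test psi) f).
      msame c2 IHHc2. gamc H2. auto.
  -
    destruct (H4 x (Dia (Star a0) f0)) as (v1 & v2 & G1 & G2 & E).
    rewrite H3 in Ho. rewrite E in Hbd.
    destruct (classic (x = Dia (Choice a1 a2) f)) as [->|Hne].
    + rewrite (proj1 G1) in Hbd by auto. rewrite (proj1 G2) in Hbd by auto.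
      assert (Hpf : ppre (Dia (Star a0) f0) f)
        by (apply ppre_inv in Hpp as [E'|E']; [discriminate|auto]).
      destruct (branch_pick _ _ _ _ _ Ho Hbd) as [[Hs Hb]|[Hs Hb]].
      * assert (Hst : step n c1) by plain_step (Dia (Choice a1 a2) f).
        mlead c1 (Dia a1 f) IHHc1; [constructor | gamc H1 | constructor; auto | auto].
      * assert (Hst : step n c2) by plain_step (Dia (Choice a1 a2) f).
        mlead c2 (Dia a2 f) IHHc2; [constructor | gamc H2 | constructor; auto | auto].
    + rewrite (proj1 (proj2 G1)) in Hbd by (split; auto).
      rewrite (proj1 (proj2 G2)) in Hbd by (split; auto).
      destruct (branch_pick _ _ _ _ _ Ho Hbd) as [[Hs Hb]|[Hs Hb]].
      * assert (Hst : step n c1) by plain_step (Dia (Choice a1 a2) f).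
        msame c1 IHHc1. gamc H1. auto.
      * assert (Hst : step n c2) by plain_step (Dia (Choice a1 a2) f).
        msame c2 IHHc2. gamc H2. auto.
  -
    destruct (H5 x (Dia (Star a0) f0)) as (v1 & v2 & G1 & G2 & E).
    rewrite H4 in Ho. rewrite E in Hbd.
    destruct (classic (x = Dia (Star a) f)) as [->|Hne].
    + rewrite (proj1 G2) in Hbd by auto.
      destruct (branch_pick _ _ _ _ _ Ho Hbd) as [[Hs Hb]|[Hs Hb]].
      * assert (Hst : step n c1) by plain_step (Dia (Star a) f).
        destruct (classic (Dia (Star a0) f0 = Dia (Star a) f)) as [Eq|Neq].
        -- injection Eq as -> ->. apply (move_end _ _ _ _ c1 _ Hst Hpre Hx Hpp); [constructor | gamc H2].
        -- rewrite (proj1 (proj2 G1)) in Hb by auto.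
           assert (Hpf : ppre (Dia (Star a0) f0) f)
             by (apply ppre_inv in Hpp as [E'|E']; [congruence|auto]).
           mlead c1 f IHHc1; [constructor | gamc H2 | auto | auto].
      * assert (Hst : step n c2) by plain_step (Dia (Star a) f).
        mlead c2 (Dia a (Dia (Star a) f)) IHHc2; [constructor | gamc H3 | constructor; auto | auto].
    + rewrite (proj1 (proj2 (proj2 G1))) in Hbd by (split; auto).
      rewrite (proj1 (proj2 G2)) in Hbd by (split; auto).
      destruct (branch_pick _ _ _ _ _ Ho Hbd) as [[Hs Hb]|[Hs Hb]].
      * assert (Hst : step n c1) by plain_step (Dia (Star a) f).
        msame c1 IHHc1. gamc H2. auto.
      * assert (Hst : step n c2) by plain_step (Dia (Star a) f).
        msame c2 IHHc2. gamc H3. auto.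
  -
    eapply dia_case; eauto; try (eapply T_dia; eauto).
Qed.

Lemma W_eq (w1 w2 : W) : proj1_sig w1 = proj1_sig w2 -> w1 = w2.
Proof.
  destruct w1 as [p1 g1], w2 as [p2 g2]; simpl; intros ->.
  rewrite (proof_irrelevance _ g1 g2); auto.
Qed.

Lemma W_end (w : W) pre e : proj1_sig w = pre ++ [e] -> ctx_ok (HCr e).
Proof.
  intros E. destruct (good_of w) as (n0 & e' & Ht & _ & Hc).
  destruct (ptail_last _ _ _ Ht) as [l0 E0]. rewrite E in E0.
  apply app_inj_tail in E0 as [_ <-]. rewrite (ptail_HCr _ _ _ Ht); auto.
Qed.

Lemma end_bound e x a0 f0 : final e -> Gam e x -> ppre (Dia (Star a0) f0) x ->
  forall v, uev e x (Dia (Star a0) f0) = Some v -> v < S (length (HCr e)).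
Proof.
  intros Hfin Hx Hpp v Hv. pose proof Hfin as (_&Ho&Hlit).
  destruct (final_inv _ Hfin) as (kids & _ & Hiff & _ & Hkp & Hbad & Hdu).
  destruct (ppre_lit _ _ _ Hpp (Hlit _ Hx)) as (b & chi & -> & Hpc).
  assert (Hnb : ~ dia_bad e kids) by (intro Hd; specialize (Hbad Hd); congruence).
  destruct (Hdu (Dia (AP b) chi) (Dia (Star a0) f0)) as [Hdu1 _].
  destruct (Hdu1 Ho eq_refl Hpp) as [Hdk Hdl].
  destruct (classic (In (b, chi) (map fst kids))) as [Hin|Hnin].
  - apply in_map_iff in Hin as [[[b' chi'] k] [E Hk]]. simpl in E. injection E as -> ->.
    rewrite (Hdk _ _ _ Hk eq_refl) in Hv.
    destruct (Nat.le_gt_cases v (length (HCr e))) as [|Hg]; [lia|].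
    exfalso; apply Hnb; right; exists b, chi, k, (Dia (Star a0) f0), v; auto.
  - assert (Hih : in_hcr (HCr e) chi (succ_set e b chi)).
    { apply NNPP; intro Hn; apply Hnin, Hiff; auto. }
    destruct (Hdl b chi Hx Hih eq_refl) as (j & e0 & [Hj1 Hj2] & Hfe & Hse & Hu).
    rewrite Hv in Hu; injection Hu as ->.
    assert (j - 1 < length (HCr e)) by (apply nth_error_Some; congruence). lia.
Qed.

Lemma comp_lead a0 f0 c b x : compG (Gam c) b x -> ppre (Dia (Star a0) f0) x ->
  exists y, Gam c y /\ leadsto x y /\ (ppre (Dia (Star a0) f0) y \/ y = f0).
Proof.
  intros Hc Hp. destruct (ppre_isdia _ _ _ Hp) as (q & y & ->).
  pose proof (ppre_inv _ _ _ Hp) as Hi.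
  destruct q as [k|t|q1 q2|q1 q2|q]; simpl in Hc.
  - contradiction.
  - destruct Hi as [E|E]; [discriminate|]. exists y; split; [tauto|split; [constructor|auto]].
  - destruct Hi as [E|E]; [discriminate|]. exists (Dia q1 (Dia q2 y)); split; auto.
    split; [constructor|left; do 2 constructor; auto].
  - destruct Hi as [E|E]; [discriminate|]. destruct Hc as [Hc|Hc].
    + exists (Dia q1 y); split; auto; split; [constructor|left; constructor; auto].
    + exists (Dia q2 y); split; auto; split; [constructor|left; constructor; auto].
  - destruct Hc as [Hc|Hc].
    + exists y; split; auto; split; [constructor|].
      destruct Hi as [E|E]; auto. injection E as _ ->; auto.
    + exists (Dia q (Dia (Star q) y)); split; auto; split; [constructor|left; constructor; auto].
Qed.

Lemma FW a0 f0 m l e : ptail m l e -> forall (w : W) pre, proj1_sig w = pre ++ l ->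
  forall x, Gam m x -> ppre (Dia (Star a0) f0) x -> reach f0 w x.
Proof.
  induction 1; intros w pre Hw x Hx Hpp.
  - pose proof H as (Ht & Ho & _).
    destruct (Qlem a0 f0 (S (length (HCr e))) e Ht Ho x pre) as (w' & Hw' & Hr); auto.
    + intros l' e' Ht'. destruct (final_ptail _ _ _ H Ht') as [-> ->].
      rewrite <- Hw. exact (proj2_sig w).
    + eapply W_end; eauto.
    + eapply end_bound; eauto.
    + destruct Hw' as (l' & e' & E & Ht'). destruct (final_ptail _ _ _ H Ht') as [-> ->].
      replace w with w'; auto. apply W_eq; congruence.
  - assert (Hin : LW w x) by (exists n; split; auto; rewrite Hw; apply in_or_app; simpl; auto).
    destruct (ppre_star _ _ _ Hpp) as [Hpf Hnf].
    destruct H as (_&_&_&p&Hp&Hcomp&Hrest&_).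
    destruct (classic (x = p)) as [->|Hne].
    + destruct (comp_lead _ _ _ _ _ Hcomp Hpp) as (y & Hy & Hl & [Hpy| ->]).
      * eapply r_lead; eauto. apply (IHptail w (pre ++ [n])); auto.
        rewrite Hw, <- app_assoc; auto.
      * eapply r_lead; eauto. constructor. exists c; split; auto.
        rewrite Hw; apply in_or_app; right; right; eapply ptail_head; eauto.
    + apply (IHptail w (pre ++ [n])); auto. rewrite Hw, <- app_assoc; auto.
Qed.

Lemma succ_world e a f : final e -> ctx_ok (HCr e) -> Gam e (Dia (AP a) f) ->
  exists c, Tab c /\ stat c = Open /\ (forall g, ~ BB c g) /\ ctx_ok (HCr c) /\
    (forall g, succ_set e a f g -> Gam c g).
Proof.
  intros Hfin Hctx Hx. pose proof Hfin as (_&Ho&Hlit).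
  destruct (final_inv _ Hfin) as (kids & _ & Hiff & Hkt & Hkp & Hbad & Hdu).
  assert (Hnb : ~ dia_bad e kids) by (intro Hd; specialize (Hbad Hd); congruence).
  destruct (classic (In (a, f) (map fst kids))) as [Hin|Hnin].
  - apply in_map_iff in Hin as [[[b' chi'] k] [E Hk]]. simpl in E. injection E as -> ->.
    destruct (Hkp _ _ _ Hk) as (Hkg & Hkh & _ & _ & Hkb).
    assert (Hko : stat k = Open).
    { destruct (classic (stat k = Open)) as [|Hn]; auto. exfalso; apply Hnb.
      left; exists (a, f), k; auto. }
    exists k; split; [eauto|split; [auto|split; [|split]]].
    + intros g Hg; apply Hkb in Hg; destruct Hg.
    + rewrite Hkh. eapply (ctx_app _ _ k); eauto.
      * intros g Hg; apply Hkb in Hg; destruct Hg.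
      * intros psi v H1 H2 H3; simpl in *.
        destruct (Nat.le_gt_cases v (length (HCr e))) as [|Hg]; [lia|].
        exfalso; apply Hnb; right; exists a, f, k, psi, v; auto.
    + intros g Hg; apply Hkg; auto.
  - assert (Hih : in_hcr (HCr e) f (succ_set e a f)).
    { apply NNPP; intro Hn; apply Hnin, Hiff; auto. }
    destruct Hih as (j & e0 & Hj & Hfe & Hse).
    destruct (Hctx j e0 Hj) as (cj & Ht1 & Ho1 & Hg1 & Hh1 & Hb1 & Hu1).
    exists cj; split; [auto|split; [auto|split; [auto|split]]].
    + rewrite Hh1; apply ctx_firstn; auto.
    + intros g Hg; apply Hg1, Hse; auto.
Qed.

Lemma world_from c : Tab c -> stat c = Open -> (forall g, ~ BB c g) -> ctx_ok (HCr c) ->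
  exists w : W, forall g, Gam c g -> LW w g.
Proof.
  intros Ht Ho Hb Hc. destruct (exist_world c Ht Ho) as (l & e & Hl).
  assert (Hg : good l) by (exists c, e; auto).
  exists (exist _ l Hg). intros g Hgg. exists c; split; auto. eapply ptail_head; eauto.
Qed.

Lemma W_final (w : W) : exists e, final e /\ ctx_ok (HCr e) /\
  forall g, LW w g -> lit_or_modal g -> Gam e g.
Proof.
  destruct (good_of w) as (n0 & e & Ht & _ & Hc). exists e; split; [|split].
  - eapply ptail_final; eauto.
  - rewrite (ptail_HCr _ _ _ Ht); auto.
  - intros g Hg Hl; eapply lit_end; eauto.
Qed.

Lemma hint : hintikka RW LW.
Proof.
  intros w.
  destruct (W_final w) as (e & Hfin & Hctx & Hend).
  split; [|split; [|split; [|split; [|split; [|split; [|split; [|split; [|split;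
    [|split; [|split; [|split; [|split]]]]]]]]]]]].
  - intros p H1 H2. apply Hend in H1; [|exact I]. apply Hend in H2; [|exact I].
    destruct (final_inv _ Hfin) as (kids & Hnc & _). apply (Hnc p); auto.
  - intros f g H. apply sat_W in H; [exact H|simpl; tauto].
  - intros a b f H. apply sat_W in H; [exact H|simpl; tauto].
  - intros a f H. apply sat_W in H; [|simpl; tauto]. simpl in H. destruct H as [H|H]; exact H.
  - intros psi f H. apply sat_W in H; [|simpl; tauto]. simpl in H. tauto.
  - intros a b f H. apply sat_W in H; [exact H|simpl; tauto].
  - intros a b f H. apply sat_W in H; [exact H|simpl; tauto].
  - intros f g H. apply sat_W in H; [exact H|simpl; tauto].
  - intros a b f H. apply sat_W in H; [exact H|simpl; tauto].
  - intros a f H. apply sat_W in H; [exact H|simpl; tauto].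
  - intros psi f H. apply sat_W in H; [|simpl; tauto]. simpl in H. tauto.
  - intros a f H. apply Hend in H; [|exact I].
    destruct (succ_world _ _ _ Hfin Hctx H) as (c & Ht & Ho & Hb & Hc & Hs).
    destruct (world_from c Ht Ho Hb Hc) as (w' & Hw').
    exists w'; split.
    + intros g Hg. apply Hend in Hg; [|exact I]. apply Hw', Hs. right; auto.
    + apply Hw', Hs. left; auto.
  - intros a f H v Hr. apply Hr; auto.
  - intros a f (m & Hm & Hg).
    destruct (good_of w) as (n0 & e' & Ht & _ & _).
    destruct (ptail_suffix _ _ _ Ht m Hm) as (pre & l & E & Ht').
    pose proof (FW a f m l e' Ht' w pre E _ Hg (ppre_base _)) as Hr.
    apply reach_chain in Hr. exact Hr.
Qed.

Theorem theorem4p7 (phi : fml) (r : node) :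
  is_nnf phi ->
  Tab r ->
  seteq (Gam r) (fun x => x = phi) ->
  HCr r = nil ->
  Nx r = None ->
  seteq (BD r) emptyset ->
  seteq (BB r) emptyset ->
  stat r = Open ->
  hintikka_structure_for phi.
Proof.
  intros _ Ht Hg Hh _ _ Hb Ho.
  assert (Hc : ctx_ok (HCr r)).
  { rewrite Hh. intros j e [_ He]. destruct (j - 1); discriminate. }
  destruct (world_from r Ht Ho) as (w & Hw); auto.
  - intros g Hgg; apply Hb in Hgg; destruct Hgg.
  - exists W, RW, LW. split; [exists w; apply Hw, Hg; reflexivity|exact hint].
Qed.
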